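(* Let $h(p):=-s_\phi(p,p)$, $C:=\mathbb{E}[Q\mid S]$, $\mathrm{GL}(S):=\mathbb{E}[d_\phi(C,Q)]$, let $S_B$ be a binned version of $S$, and let $\mathscr{R}:\mathcal{X}\to\mathbb{N}$ be a partition of the feature space (write $\mathscr{R}$ for $\mathscr{R}(X)$). Define $\mathrm{GL}_{\mathrm{explained}}(S_B):=\mathbb{E}[\mathrm{Var}_h(\mathbb{E}[Q\mid S_B,\mathscr{R}]\mid S_B)]$, $\mathrm{GL}_{\mathrm{residual}}(S_B):=\mathbb{E}[\mathrm{Var}_h(Q\mid S_B,\mathscr{R})]$ and $\mathrm{GL}_{\mathrm{induced}}(S,S_B):=\mathbb{E}[\mathrm{Var}_h(C\mid S_B)]$. Then $$\mathrm{GL}(S)=\mathrm{GL}_{\mathrm{explained}}(S_B)-\mathrm{GL}_{\mathrm{induced}}(S,S_B)+\mathrm{GL}_{\mathrm{residual}}(S_B).$$ If the scoring rule is proper, then $\mathrm{GL}(S)\ge \mathrm{GL}_{\mathrm{explained}}(S_B)-\mathrm{GL}_{\mathrm{induced}}(S,S_B)$.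
   Context: Let $(X,Y)$ be jointly distributed with $X\in\mathcal{X}$ and $Y\in\{e_1,\dots,e_K\}$ (one-hot vectors of $\mathbb{R}^K$); $\Delta_K$ is the probability simplex; $Q\in\Delta_K$ with $Q_k:=P(Y=e_k\mid X)$; $S=f(X)\in\Delta_K$ for a classifier $f$. A scoring rule is $\phi:\Delta_K\times\{e_1,\dots,e_K\}\to\mathbb{R}$, with $s_\phi(P,q):=\sum_k\phi(P,e_k)q_k$ and $d_\phi(P,q):=s_\phi(P,q)-s_\phi(q,q)$; $\phi$ is proper if $d_\phi\ge0$. For $f:\mathbb{R}^d\to\mathbb{R}$, $\mathrm{Var}_f(U\mid V):=\mathbb{E}[f(U)\mid V]-f(\mathbb{E}[U\mid V])$. Binned classifier: given a partition $\{\mathcal{B}_j\}_{1\le j\le J}$ of $\Delta_K$, $S_B$ equals $\mathbb{E}[S\mid S\in\mathcal{B}_j]$ on $\{S\in\mathcal{B}_j\}$. All required expectations are assumed to exist. *)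

(* Defs.v *)
From HB Require Import structures.
From mathcomp Require Import all_boot all_order all_algebra.
From mathcomp Require Import all_classical all_reals all_analysis.
Set Implicit Arguments.
Unset Strict Implicit.
Unset Printing Implicit Defensive.
Import Order.TTheory GRing.Theory Num.Theory.
Import numFieldNormedType.Exports.
Local Open Scope classical_set_scope.
Local Open Scope ring_scope.

Section Defs.
Context {R : realType}.

Definition simplex (K : nat) : set ('I_K -> R) :=
  [set p | (forall k, 0 <= p k) /\ \sum_(k < K) p k = 1].


Definition borelK (K : nat) : set (set ('I_K -> R)) :=
  <<s [set E | exists (k : 'I_K) (A : set R),
          measurable A /\ E = (fun v : 'I_K -> R => v k) @^-1` A] >>.


(* scoring rule phi : Delta_K x {e_1..e_K} -> R, with e_k encoded as k *)
Definition s_phi (K : nat) (phi : ('I_K -> R) -> 'I_K -> R)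
  (P q : 'I_K -> R) : R := \sum_(k < K) phi P k * q k.
Definition d_phi (K : nat) (phi : ('I_K -> R) -> 'I_K -> R)
  (P q : 'I_K -> R) : R := s_phi phi P q - s_phi phi q q.
Definition h_phi (K : nat) (phi : ('I_K -> R) -> 'I_K -> R)
  (p : 'I_K -> R) : R := - s_phi phi p p.
Definition proper_scoring (K : nat) (phi : ('I_K -> R) -> 'I_K -> R) : Prop :=
  forall P q, @simplex K P -> @simplex K q -> 0 <= d_phi phi P q.

Definition phi_measurable (K : nat) (phi : ('I_K -> R) -> 'I_K -> R) : Prop :=
  forall k (B : set R), measurable B -> @borelK K ((fun v => phi v k) @^-1` B).

Context {d : measure_display} {Omega : measurableType d}.

Definition sigma_vec (K : nat) (V : Omega -> 'I_K -> R) : set (set Omega) :=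
  [set V @^-1` A | A in @borelK K].
Definition sigma_nat (N : Omega -> nat) : set (set Omega) :=
  [set N @^-1` A | A in [set: set nat]].
Definition sigma_of {d'} {T : measurableType d'} (X : Omega -> T)
  : set (set Omega) := [set X @^-1` A | A in [set A : set T | measurable A]].
Definition sigma_join (G1 G2 : set (set Omega)) : set (set Omega) :=
  <<s G1 `|` G2 >>.

Variable P : probability Omega R.

Definition Exp (Z : Omega -> R) : R := \int[P]_w Z w.

Definition is_cond_exp (G : set (set Omega)) (Z W : Omega -> R) : Prop :=
  [/\ (forall B : set R, measurable B -> G (W @^-1` B)),
      P.-integrable setT (EFin \o W) &
      forall A, G A ->
        (\int[P]_(w in A) (W w)%:E = \int[P]_(w in A) (Z w)%:E)%E].

Definition is_cond_expv (K : nat) (G : set (set Omega))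
  (Z W : Omega -> 'I_K -> R) : Prop :=
  forall k, is_cond_exp G (fun w => Z w k) (fun w => W w k).

(* binned classifier: S_B = E[S | S in B_j] on {S in B_j} *)
Definition binned (K J : nat) (B : 'I_J -> set ('I_K -> R))
  (S : Omega -> 'I_K -> R) : Omega -> 'I_K -> R :=
  fun w k => \sum_(j < J) \1_(S @^-1` B j) w *
     ((\int[P]_(u in S @^-1` B j) S u k) / fine (P (S @^-1` B j))).

End Defs.
Arguments simplex {R} K.
Arguments borelK {R} K.

(* Main.v *)
Require Import Defs.
From HB Require Import structures.
From mathcomp Require Import all_boot all_order all_algebra.
From mathcomp Require Import all_classical all_reals all_analysis.
Import Order.TTheory GRing.Theory Num.Theory.
Import numFieldNormedType.Exports.
Local Open Scope classical_set_scope.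
Local Open Scope ring_scope.
From mathcomp Require Import ring lra.
Import HBNNSimple.
Section keylemma.
Context {R : realType} {d : measure_display} {T : measurableType d}
  (mu : {measure set T -> \bar R}).

Lemma int_indicM (A : set T) (W : T -> R) :
  (\int[mu]_w ((\1_A w * W w)%:E) = \int[mu]_(w in A) (W w)%:E)%E.
Proof.
rewrite [RHS]integral_mkcond; apply: eq_integral => w _.
by rewrite /patch indicE; case: (w \in A); rewrite ?mul1r ?mul0r.
Qed.

Variable F : T -> R.
Hypothesis mF : measurable_fun setT F.

Lemma mpre (B : set R) : measurable B -> measurable (F @^-1` B).
Proof. by move=> mB; rewrite -(setTI (F @^-1` B)); exact: mF. Qed.

Lemma dyadicE n k : dyadic_approx setT (EFin \o F) n k =
  F @^-1` (if (k < n * 2 ^ n)%N then [set` dyadic_itv R n k] else set0).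
Proof.
rewrite /dyadic_approx; case: ifP => _ //; rewrite setTI.
apply/funext => x; apply/propext; split => /=.
  case/set_mem => r rI rE. have rF : r = F x by case: rE. by rewrite -rF; exact: rI.
by move=> h; apply/mem_set; exists (F x).
Qed.

Lemma integerE n : integer_approx setT (EFin \o F) n =
  F @^-1` `[n%:R, +oo[.
Proof.
rewrite /integer_approx setTI; apply/funext => x; apply/propext.
by rewrite /= in_itv /= andbT lee_fin.
Qed.

Lemma int_approx (W : T -> R) n : measurable_fun setT W -> (forall w, 0 <= W w) ->
  (\int[mu]_w ((approx setT (EFin \o F) n w * W w)%:E) =
   \sum_(k < n * 2 ^ n) (k%:R * 2 ^- n)%:E *
      \int[mu]_(w in dyadic_approx setT (EFin \o F) n k) (W w)%:E +
   n%:R%:E * \int[mu]_(w in integer_approx setT (EFin \o F) n) (W w)%:E)%E.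
Proof.
move=> mW W0.
have mA k : measurable (dyadic_approx setT (EFin \o F) n k).
  rewrite dyadicE; apply: mpre.
  by case: ifP => _ //; exact: measurable_itv.
have mB : measurable (integer_approx setT (EFin \o F) n).
  rewrite integerE; apply: mpre; exact: measurable_itv.
have IW0 (A : set T) w : (0 <= (\1_A w * W w)%:E)%E.
  by rewrite lee_fin mulr_ge0.
under eq_integral => w _ do
  rewrite /approx mulrDl big_distrl /= EFinD -sumEFin.
rewrite ge0_integralD //; last 4 first.
- by move=> w _; apply: sume_ge0 => k _; rewrite lee_fin !mulr_ge0.
- apply: emeasurable_sum => k; apply/measurable_realfun.measurable_EFinP.
  apply: measurable_realfun.measurable_funM => //.
  apply: measurable_realfun.measurable_funM => //; exact: measurable_indic.
- by move=> w _; rewrite lee_fin !mulr_ge0.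
- apply/measurable_realfun.measurable_EFinP.
  apply: measurable_realfun.measurable_funM => //.
  apply: measurable_realfun.measurable_funM => //; exact: measurable_indic.
rewrite ge0_integral_sum //; last 2 first.
- move=> k; apply/measurable_realfun.measurable_EFinP.
  apply: measurable_realfun.measurable_funM => //.
  apply: measurable_realfun.measurable_funM => //; exact: measurable_indic.
- by move=> k w _; rewrite lee_fin !mulr_ge0.
congr (_ + _)%E.
  apply: eq_bigr => k _.
  transitivity (\int[mu]_x ((k%:R * 2 ^- n)%:E *
     (\1_(dyadic_approx setT (EFin \o F) n k) x * W x)%:E))%E.
    by apply: eq_integral => x _; rewrite -EFinM !mulrA.
  rewrite ge0_integralZl_EFin ?int_indicM //.
    apply/measurable_realfun.measurable_EFinP.
    apply: measurable_realfun.measurable_funM => //; exact: measurable_indic.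
transitivity (\int[mu]_x ((n%:R)%:E *
   (\1_(integer_approx setT (EFin \o F) n) x * W x)%:E))%E.
  by apply: eq_integral => x _; rewrite -EFinM !mulrA.
rewrite ge0_integralZl_EFin ?int_indicM //.
apply/measurable_realfun.measurable_EFinP.
apply: measurable_realfun.measurable_funM => //; exact: measurable_indic.
Qed.

Hypothesis F0 : forall w, 0 <= F w.

Lemma int_lim (W : T -> R) : measurable_fun setT W -> (forall w, 0 <= W w) ->
  (\int[mu]_w ((F w * W w)%:E) =
   limn (fun n => \int[mu]_w ((approx setT (EFin \o F) n w * W w)%:E)))%E.
Proof.
move=> mW W0.
have mf := (measurable_realfun.measurable_EFinP setT F).2 mF.
have a0 n w : 0 <= approx setT (EFin \o F) n w.
  rewrite /approx; apply: addr_ge0; last by rewrite mulr_ge0 // indicE.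
  by apply: sumr_ge0 => k _; rewrite !mulr_ge0 // indicE.
have ma n : measurable_fun setT (approx setT (EFin \o F) n).
  rewrite -(nnsfun_approxE measurableT mf n); exact: measurable_funPT.
rewrite -monotone_convergence //.
- apply: eq_integral => w _; apply/esym/cvg_lim => //.
  apply: cvg_EFin; first exact: nearW.
  have := @cvg_approx _ _ _ setT (EFin \o F) w (fun x _ => F0 x) I (ltry _).
  by move=> /= h; apply: cvgMl h.
- move=> n; apply/measurable_realfun.measurable_EFinP.
  exact: measurable_realfun.measurable_funM.
- by move=> n w _; rewrite lee_fin mulr_ge0.
- move=> w _ m n mn; rewrite lee_fin ler_wpM2r //.
  exact/lefP/nd_approx.
Qed.

Lemma key_nn (G : set (set T)) (U V : T -> R) :
  (forall A, G A -> \int[mu]_(w in A) (V w)%:E = \int[mu]_(w in A) (U w)%:E)%E ->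
  (forall B, measurable B -> G (F @^-1` B)) ->
  measurable_fun setT U -> measurable_fun setT V ->
  (forall w, 0 <= U w) -> (forall w, 0 <= V w) ->
  (\int[mu]_w ((F w * U w)%:E) = \int[mu]_w ((F w * V w)%:E))%E.
Proof.
move=> hG hFB mU mV U0 V0.
suff E : (fun n => \int[mu]_w ((approx setT (EFin \o F) n w * U w)%:E))%E =
  (fun n => \int[mu]_w ((approx setT (EFin \o F) n w * V w)%:E))%E.
  by rewrite !int_lim // E.
apply/funext => n; rewrite !int_approx //.
congr (_ + _)%E.
  apply: eq_bigr => k _; congr (_ * _)%E; rewrite hG // dyadicE; apply: hFB.
  by case: ifP => _ //; exact: measurable_itv.
by congr (_ * _)%E; rewrite hG // integerE; apply: hFB; exact: measurable_itv.
Qed.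

End keylemma.

Section keylemma2.
Context {R : realType} {d : measure_display} {T : measurableType d}
  (mu : {measure set T -> \bar R}).

Lemma bounded01 (U : T -> R) : (forall w, 0 <= U w <= 1) -> [bounded U x | x in setT].
Proof.
move=> U01; exists 1; split => // M M1 x _ /=.
have /andP[U0 U1] := U01 x.
by rewrite ger0_norm // (le_trans U1) // ltW.
Qed.

Lemma key (G : set (set T)) (U V Z : T -> R) :
  (forall A, G A -> \int[mu]_(w in A) (V w)%:E = \int[mu]_(w in A) (U w)%:E)%E ->
  (forall B, measurable B -> G (Z @^-1` B)) ->
  measurable_fun setT U -> measurable_fun setT V ->
  (forall w, 0 <= U w <= 1) -> (forall w, 0 <= V w <= 1) ->
  mu.-integrable setT (EFin \o Z) ->
  \int[mu]_w (Z w * U w) = \int[mu]_w (Z w * V w).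
Proof.
move=> hG hZB mU mV U01 V01 iZ.
have mZ : measurable_fun setT Z.
  by apply/measurable_realfun.measurable_EFinP; exact: measurable_int iZ.
have U0 w : 0 <= U w by case/andP: (U01 w).
have V0 w : 0 <= V w by case/andP: (V01 w).
have split (W : T -> R) : measurable_fun setT W -> (forall w, 0 <= W w <= 1) ->
   \int[mu]_w (Z w * W w) =
   \int[mu]_w (Z^\+ w * W w) - \int[mu]_w (Z^\- w * W w).
  move=> mW W01.
  have ip : mu.-integrable setT (EFin \o (fun w => Z^\+ w * W w)).
    apply: (eq_integrable measurableT _ _ _ (integrableMl measurableT (integrable_funrpos measurableT iZ) mW (bounded01 W W01))).
    by move=> w _.
  have ineg : mu.-integrable setT (EFin \o (fun w => Z^\- w * W w)).
    apply: (eq_integrable measurableT _ _ _ (integrableMl measurableT (integrable_funrneg measurableT iZ) mW (bounded01 W W01))).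
    by move=> w _.
  rewrite -RintegralB //; apply: eq_Rintegral => w _.
  by rewrite -mulrBl -[in LHS](funrposBneg Z).
rewrite !split //; congr (_ - _); rewrite /Rintegral; congr fine.
  apply: (@key_nn R d T mu _ (measurable_realfun.measurable_funrpos mZ) (funrpos_ge0 Z) G) => //.
  move=> B mB; apply: (hZB ((@funrpos R R id) @^-1` B)).
  rewrite -(setTI (_ @^-1` B)); apply: measurable_realfun.measurable_funrpos => //.
apply: (@key_nn R d T mu _ (measurable_realfun.measurable_funrneg mZ) (funrneg_ge0 Z) G) => //.
move=> B mB; apply: (hZB ((@funrneg R R id) @^-1` B)).
rewrite -(setTI (_ @^-1` B)); exact: measurable_realfun.measurable_funrneg.
Qed.

End keylemma2.

Section helpers.
Context {R : realType} {d : measure_display} {T : measurableType d}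
  (mu : {measure set T -> \bar R}).

Lemma int_sumEFin (I : Type) (s : seq I) (f : I -> T -> R) :
  (forall i, mu.-integrable setT (EFin \o f i)) ->
  mu.-integrable setT (EFin \o (fun x => \sum_(i <- s) f i x)).
Proof.
move=> hf; apply: (eq_integrable measurableT (fun x => \sum_(i <- s) (f i x)%:E)%E).
  by move=> x _; rewrite /= sumEFin.
by apply: integrable_sum => // i _; exact: hf.
Qed.

Lemma Rint_sum (I : Type) (s : seq I) (f : I -> T -> R) :
  (forall i, mu.-integrable setT (EFin \o f i)) ->
  \int[mu]_x (\sum_(i <- s) f i x) = \sum_(i <- s) \int[mu]_x f i x.
Proof.
move=> hf; elim: s => [|a s IH].
  under eq_Rintegral do rewrite big_nil.
  by rewrite big_nil /Rintegral integral0.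
under eq_Rintegral do rewrite big_cons.
by rewrite RintegralD // ?IH ?big_cons //; exact: int_sumEFin.
Qed.

End helpers.

Lemma simplex01 {R : realType} K (p : 'I_K -> R) : simplex K p -> forall k, 0 <= p k <= 1.
Proof.
move=> [p0 p1] k; rewrite p0 /= -p1 (bigD1 k) //= lerDl.
by apply: sumr_ge0 => i _.
Qed.

Arguments simplex01 {R K p}.

Lemma sigmaT {T : Type} (G : set (set T)) : sigma_algebra setT G -> G setT.
Proof. by case=> h0 hC _; rewrite -(setD0 setT); apply: hC. Qed.

Lemma borelK_sigma {R : realType} K : sigma_algebra setT (borelK (R:=R) K).
Proof. exact: smallest_sigma_algebra. Qed.

Lemma vec_pre {R : realType} {T : Type} (G : set (set T)) K (W : T -> 'I_K -> R) :
  sigma_algebra setT G ->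
  (forall k (B : set R), measurable B -> G ((fun w => W w k) @^-1` B)) ->
  forall E, borelK K E -> G (W @^-1` E).
Proof.
move=> sG hW E hE.
have : image_set_system setT W G E.
  apply: (smallest_sub (sigma_algebra_image W sG)) hE.
  move=> _ [k [A [mA ->]]]; rewrite /image_set_system /= setTI; exact: hW.
by rewrite /image_set_system /= setTI.
Qed.

Lemma sigma_vec_sigma {R : realType} {d} {Omega : measurableType d} K
  (V : Omega -> 'I_K -> R) : sigma_algebra setT (sigma_vec V).
Proof.
have -> : sigma_vec V = preimage_set_system setT V (borelK K).
  rewrite /sigma_vec /preimage_set_system; congr image.
  by apply/funext => B; rewrite setTI.
exact: sigma_algebra_preimage (borelK_sigma K).
Qed.

Lemma phi_pre {R : realType} {T : Type} (G : set (set T)) K (W : T -> 'I_K -> R)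
  (phi : ('I_K -> R) -> 'I_K -> R) :
  phi_measurable phi -> sigma_algebra setT G ->
  (forall k (B : set R), measurable B -> G ((fun w => W w k) @^-1` B)) ->
  forall k (B : set R), measurable B -> G ((fun w => phi (W w) k) @^-1` B).
Proof. by move=> hphi sG hW k B mB; exact: (@vec_pre R T G K W sG hW _ (hphi k B mB)). Qed.

Lemma SB_sub {R : realType} {d} {Omega : measurableType d} (P : probability Omega R)
  K J (B : 'I_J -> set ('I_K -> R)) (S : Omega -> 'I_K -> R) :
  (forall j, borelK K (B j)) -> (forall i j : 'I_J, i != j -> B i `&` B j = set0) ->
  (forall w, exists j, B j (S w)) ->
  forall A, sigma_vec (binned P B S) A -> sigma_vec S A.
Proof.
move=> hBm hBd hcov _ [A hA <-].
set c := fun j k => (\int[P]_(u in S @^-1` B j) S u k) / fine (P (S @^-1` B j)).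
have disj j j0 w : j != j0 -> B j0 (S w) -> ~ B j (S w).
  move=> jj0 Bj0 Bj; have : (B j `&` B j0) (S w) by split.
  by rewrite hBd.
exists (\bigcup_(j in [set j | A (c j)]) B j).
  exact: (@fin_bigcup_measurable _ (g_sigma_algebraType _) _ _ _ finite_finset (fun j _ => hBm j)).
apply/funext => w; apply/propext; have [j0 Bj0] := hcov w.
have SBw : binned P B S w = c j0.
  apply/funext => k; rewrite /binned (bigD1 j0) //= big1 ?addr0.
    by rewrite indicE mem_set // mul1r.
  by move=> j jj0; rewrite indicE memNset ?mul0r //; exact: disj jj0 Bj0.
split => [[j Aj Bj] | h].
  rewrite /= SBw; case: (eqVneq j j0) => [<- // | jj0].
  by exfalso; exact: disj jj0 Bj0 Bj.
by exists j0 => //=; rewrite /= -SBw.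
Qed.

Section ce.
Context {R : realType} {d : measure_display} {Omega : measurableType d}
  (P : probability Omega R).

Lemma ce_pre G (Z W : Omega -> R) : is_cond_exp P G Z W ->
  forall B, measurable B -> G (W @^-1` B).
Proof. by case. Qed.
Lemma ce_int G (Z W : Omega -> R) : is_cond_exp P G Z W ->
  P.-integrable setT (EFin \o W).
Proof. by case. Qed.
Lemma ce_eq G (Z W : Omega -> R) : is_cond_exp P G Z W ->
  forall A, G A -> (\int[P]_(w in A) (W w)%:E = \int[P]_(w in A) (Z w)%:E)%E.
Proof. by case. Qed.
Lemma ce_meas G (Z W : Omega -> R) : is_cond_exp P G Z W ->
  measurable_fun setT W.
Proof.
move=> /ce_int iW; apply/measurable_realfun.measurable_EFinP.
exact: measurable_int iW.
Qed.

Lemma intB (f g : Omega -> R) : P.-integrable setT (EFin \o f) ->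
  P.-integrable setT (EFin \o g) ->
  P.-integrable setT (EFin \o (fun w => f w - g w)).
Proof.
move=> hf hg; apply: (eq_integrable measurableT _ _ _ (integrableB measurableT hf hg)).
by move=> w _; rewrite /= EFinB.
Qed.

Lemma intMb (f g : Omega -> R) : P.-integrable setT (EFin \o f) ->
  measurable_fun setT g -> (forall w, 0 <= g w <= 1) ->
  P.-integrable setT (EFin \o (fun w => f w * g w)).
Proof.
move=> hf mg g01.
apply: (eq_integrable measurableT _ _ _ (integrableMl measurableT hf mg (bounded01 g g01))).
by move=> w _.
Qed.

End ce.
Arguments ce_pre {R d Omega P G Z W}.
Arguments ce_int {R d Omega P G Z W}.
Arguments ce_eq {R d Omega P G Z W}.
Arguments ce_meas {R d Omega P G Z W}.
Arguments intB {R d Omega P f g}.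
Arguments intMb {R d Omega P f g}.

Theorem proposition2
  (R : realType) (d : measure_display) (Omega : measurableType d)
  (P : probability Omega R) (K : nat)
  (dX : measure_display) (Xsp : measurableType dX)
  (X : Omega -> Xsp) (hX : measurable_fun setT X)
  (Y : Omega -> 'I_K) (hY : forall k, measurable [set w | Y w = k])
  (phi : ('I_K -> R) -> 'I_K -> R) (hphi : phi_measurable phi)
  (f : Xsp -> 'I_K -> R) (hf : forall k, measurable_fun setT (fun x => f x k))
  (hfS : forall x, simplex K (f x))
  (J : nat) (B : 'I_J -> set ('I_K -> R))
  (hBm : forall j, borelK K (B j))
  (hBsub : forall j, B j `<=` simplex K)
  (hBcov : simplex K `<=` \bigcup_(j in [set: 'I_J]) B j)
  (hBdisj : forall i j : 'I_J, i != j -> B i `&` B j = set0)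
  (Rp : Xsp -> nat) (hRp : forall n, measurable (Rp @^-1` [set n]))
  (Q : Omega -> 'I_K -> R)
  (hQ : is_cond_expv P (sigma_of X) (fun w k => (\1_[set u | Y u = k] w : R)) Q)
  (hQS : forall w, simplex K (Q w)) :
  let S := fun w => f (X w) in
  let SB := binned P B S in
  let Rv := fun w => Rp (X w) in
  let GSB := sigma_vec SB in
  let GSBR := sigma_join (sigma_vec SB) (sigma_nat Rv) in
  let h := h_phi phi in
  forall (C : Omega -> 'I_K -> R)
    (hC : is_cond_expv P (sigma_vec S) Q C) (hCS : forall w, simplex K (C w))
    (QBR : Omega -> 'I_K -> R)
    (hQBR : is_cond_expv P GSBR Q QBR) (hQBRS : forall w, simplex K (QBR w))
    (M1 : Omega -> 'I_K -> R)
    (hM1 : is_cond_expv P GSB QBR M1) (hM1S : forall w, simplex K (M1 w))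
    (H1 : Omega -> R) (hH1 : is_cond_exp P GSB (fun w => h (QBR w)) H1)
    (M2 : Omega -> 'I_K -> R)
    (hM2 : is_cond_expv P GSB C M2) (hM2S : forall w, simplex K (M2 w))
    (H2 : Omega -> R) (hH2 : is_cond_exp P GSB (fun w => h (C w)) H2)
    (H3 : Omega -> R) (hH3 : is_cond_exp P GSBR (fun w => h (Q w)) H3)
    (hint : forall k, [/\ P.-integrable setT (EFin \o (fun w => phi (Q w) k)),
       P.-integrable setT (EFin \o (fun w => phi (C w) k)),
       P.-integrable setT (EFin \o (fun w => phi (QBR w) k)),
       P.-integrable setT (EFin \o (fun w => phi (M1 w) k)) &
       P.-integrable setT (EFin \o (fun w => phi (M2 w) k))]),
  let GL := Exp P (fun w => d_phi phi (C w) (Q w)) in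
  let GL_explained := Exp P (fun w => H1 w - h (M1 w)) in
  let GL_induced := Exp P (fun w => H2 w - h (M2 w)) in
  let GL_residual := Exp P (fun w => H3 w - h (QBR w)) in
  GL = GL_explained - GL_induced + GL_residual /\
  (proper_scoring phi -> GL_explained - GL_induced <= GL).

Proof.
move=> S SB Rv GSB GSBR h C hC hCS QBR hQBR hQBRS M1 hM1 hM1S H1 hH1
  M2 hM2 hM2S H2 hH2 H3 hH3 hint GL GL_explained GL_induced GL_residual.
have sS : sigma_algebra setT (sigma_vec S) := sigma_vec_sigma _ S.
have sSB : sigma_algebra setT GSB := sigma_vec_sigma _ SB.
have sSBR : sigma_algebra setT GSBR := smallest_sigma_algebra _ _.
have SB_S : forall A, GSB A -> sigma_vec S A.
  apply: SB_sub => // w; have [j _ Bj] := hBcov _ (hfS (X w)); by exists j.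
have SB_SBR : forall A, GSB A -> GSBR A.
  by move=> A hA; apply: sub_sigma_algebra; left.
have mQ k := ce_meas (hQ k).
have mC k := ce_meas (hC k).
have mQBR k := ce_meas (hQBR k).
have mM1 k := ce_meas (hM1 k).
have mM2 k := ce_meas (hM2 k).
have bQ k w := simplex01 (hQS w) k.
have bC k w := simplex01 (hCS w) k.
have bQBR k w := simplex01 (hQBRS w) k.
have bM1 k w := simplex01 (hM1S w) k.
have bM2 k w := simplex01 (hM2S w) k.
have iphiQ k : P.-integrable setT (EFin \o (fun w => phi (Q w) k)) by case: (hint k).
have iphiC k : P.-integrable setT (EFin \o (fun w => phi (C w) k)) by case: (hint k).
have iphiQBR k : P.-integrable setT (EFin \o (fun w => phi (QBR w) k)) by case: (hint k).
have iphiM1 k : P.-integrable setT (EFin \o (fun w => phi (M1 w) k)) by case: (hint k).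
have iphiM2 k : P.-integrable setT (EFin \o (fun w => phi (M2 w) k)) by case: (hint k).

have eqa k : \int[P]_w (phi (C w) k * Q w k) = \int[P]_w (phi (C w) k * C w k).
  apply: (key P (sigma_vec S) (fun w => Q w k) (fun w => C w k)
    (fun w => phi (C w) k) (ce_eq (hC k))
    (@phi_pre R Omega _ K C phi hphi sS (fun k => ce_pre (hC k)) k))
    => //.
have eqb k : \int[P]_w (phi (QBR w) k * Q w k) =
    \int[P]_w (phi (QBR w) k * QBR w k).
  apply: (key P GSBR (fun w => Q w k) (fun w => QBR w k)
    (fun w => phi (QBR w) k) (ce_eq (hQBR k))
    (@phi_pre R Omega _ K QBR phi hphi sSBR (fun k => ce_pre (hQBR k)) k))
    => //.
have eqc k (Z : Omega -> R) : (forall B, measurable B -> GSB (Z @^-1` B)) ->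
    P.-integrable setT (EFin \o Z) ->
    \int[P]_w (Z w * M1 w k) = \int[P]_w (Z w * M2 w k).
  move=> hZ iZ.
  rewrite -(key P GSB (fun w => QBR w k) (fun w => M1 w k) Z (ce_eq (hM1 k)) hZ
    (mQBR k) (mM1 k) (bQBR k) (bM1 k) iZ).
  rewrite -(key P GSBR (fun w => Q w k) (fun w => QBR w k) Z (ce_eq (hQBR k))
    (fun B mB => SB_SBR _ (hZ B mB)) (mQ k) (mQBR k) (bQ k) (bQBR k) iZ).
  rewrite -(key P GSB (fun w => C w k) (fun w => M2 w k) Z (ce_eq (hM2 k)) hZ
    (mC k) (mM2 k) (bC k) (bM2 k) iZ).
  by rewrite -(key P (sigma_vec S) (fun w => Q w k) (fun w => C w k) Z (ce_eq (hC k))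
    (fun B mB => SB_S _ (hZ B mB)) (mQ k) (mC k) (bQ k) (bC k) iZ).
have aek k : ae_eq P setT (EFin \o (fun w => (M1 w k - M2 w k) ^+ 2)) (cst 0%R).
  have e1 := eqc k (fun w => M1 w k) (ce_pre (hM1 k)) (ce_int (hM1 k)).
  have e2 := eqc k (fun w => M2 w k) (ce_pre (hM2 k)) (ce_int (hM2 k)).
  have i11 := intMb (ce_int (hM1 k)) (mM1 k) (bM1 k).
  have i12 := intMb (ce_int (hM1 k)) (mM2 k) (bM2 k).
  have i21 := intMb (ce_int (hM2 k)) (mM1 k) (bM1 k).
  have i22 := intMb (ce_int (hM2 k)) (mM2 k) (bM2 k).
  have iexp := intB (intB i11 i12) (intB i21 i22).
  have isq : P.-integrable setT (EFin \o (fun w => (M1 w k - M2 w k) ^+ 2)).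
    apply: (eq_integrable measurableT _ _ _ iexp) => w _ /=; congr EFin; ring.
  have sq0 : \int[P]_w ((M1 w k - M2 w k) ^+ 2) = 0.
    transitivity (\int[P]_w ((M1 w k * M1 w k - M1 w k * M2 w k) -
                           (M2 w k * M1 w k - M2 w k * M2 w k))).
      by apply: eq_Rintegral => w _; ring.
    rewrite (RintegralB measurableT (intB i11 i12) (intB i21 i22)).
    rewrite (RintegralB measurableT i11 i12) (RintegralB measurableT i21 i22).
    by rewrite e1 e2 !subrr.
  apply/(ae_eq_integral_abs P measurableT (measurable_int _ isq)).
  under eq_integral do rewrite gee0_abs ?lee_fin ?sqr_ge0 //.
  rewrite -(fineK (integrable_fin_num measurableT isq)).
  by move: sq0; rewrite /Rintegral => ->.

have iS (W V : Omega -> 'I_K -> R) :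
    (forall k, P.-integrable setT (EFin \o (fun w => phi (W w) k))) ->
    (forall k, measurable_fun setT (fun w => V w k)) ->
    (forall k w, 0 <= V w k <= 1) ->
    P.-integrable setT (EFin \o (fun w => s_phi phi (W w) (V w))).
  move=> iW mV bV; rewrite /s_phi.
  by apply: int_sumEFin => k; exact: intMb (iW k) (mV k) (bV k).
have Rs (W V : Omega -> 'I_K -> R) :
    (forall k, P.-integrable setT (EFin \o (fun w => phi (W w) k))) ->
    (forall k, measurable_fun setT (fun w => V w k)) ->
    (forall k w, 0 <= V w k <= 1) ->
    \int[P]_w (s_phi phi (W w) (V w)) =
    \sum_(k < K) \int[P]_w (phi (W w) k * V w k).
  move=> iW mV bV; rewrite /s_phi.
  by apply: Rint_sum => k; exact: intMb (iW k) (mV k) (bV k).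
have ES : \int[P]_w (s_phi phi (M1 w) (M1 w)) = \int[P]_w (s_phi phi (M2 w) (M2 w)).
  rewrite /Rintegral; congr fine.
  apply: ae_eq_integral => //.
  - exact: (measurable_int _ (iS _ _ iphiM1 mM1 bM1)).
  - exact: (measurable_int _ (iS _ _ iphiM2 mM2 bM2)).
  have aek' : forall k, \forall w \ae P,
      setT w -> ((M1 w k - M2 w k) ^+ 2)%:E = (cst 0%R : Omega -> \bar R) w.
    by move=> k; exact: aek k.
  apply: filterS (filter_forall _ aek') => w H _.
  have -> // : M1 w = M2 w.
  apply/funext => k; have := H k I; rewrite /= => -[] /eqP.
  by rewrite sqrf_eq0 subr_eq0 => /eqP.
have ha : \int[P]_w (s_phi phi (C w) (Q w)) = \int[P]_w (s_phi phi (C w) (C w)).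
  by rewrite !Rs //; apply: eq_bigr => k _; exact: eqa.
have hb : \int[P]_w (s_phi phi (QBR w) (Q w)) = \int[P]_w (s_phi phi (QBR w) (QBR w)).
  by rewrite !Rs //; apply: eq_bigr => k _; exact: eqb.
have ih (W : Omega -> 'I_K -> R) :
    (forall k, P.-integrable setT (EFin \o (fun w => phi (W w) k))) ->
    (forall k, measurable_fun setT (fun w => W w k)) ->
    (forall k w, 0 <= W w k <= 1) ->
    P.-integrable setT (EFin \o (fun w => h (W w))).
  move=> iW mW bW.
  apply: (eq_integrable measurableT _ _ _ (integrableZl measurableT (-1) (iS _ _ iW mW bW))).
  by move=> w _ /=; rewrite -EFinM mulN1r.
have Eh (W : Omega -> 'I_K -> R) :
    (forall k, P.-integrable setT (EFin \o (fun w => phi (W w) k))) ->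
    (forall k, measurable_fun setT (fun w => W w k)) ->
    (forall k w, 0 <= W w k <= 1) ->
    \int[P]_w (h (W w)) = - \int[P]_w (s_phi phi (W w) (W w)).
  move=> iW mW bW; rewrite /h /h_phi.
  under eq_Rintegral do rewrite -mulN1r.
  by rewrite RintegralZl ?mulN1r //; exact: iS.
have EH1 : \int[P]_w (H1 w) = \int[P]_w (h (QBR w)).
  by rewrite /Rintegral (ce_eq hH1 _ (sigmaT _ sSB)).
have EH2 : \int[P]_w (H2 w) = \int[P]_w (h (C w)).
  by rewrite /Rintegral (ce_eq hH2 _ (sigmaT _ sSB)).
have EH3 : \int[P]_w (H3 w) = \int[P]_w (h (Q w)).
  by rewrite /Rintegral (ce_eq hH3 _ (sigmaT _ sSBR)).
have eGL : GL = (\int[P]_w (s_phi phi (C w) (C w))) - (\int[P]_w (s_phi phi (Q w) (Q w))).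
  rewrite /GL /Exp /d_phi RintegralB ?ha //; exact: iS.
have eEx : GL_explained = - (\int[P]_w (s_phi phi (QBR w) (QBR w))) +
    (\int[P]_w (s_phi phi (M1 w) (M1 w))).
  rewrite /GL_explained /Exp (RintegralB measurableT (ce_int hH1) (ih M1 iphiM1 mM1 bM1)).
  rewrite EH1 (Eh QBR iphiQBR mQBR bQBR) (Eh M1 iphiM1 mM1 bM1); lra.
have eIn : GL_induced = - (\int[P]_w (s_phi phi (C w) (C w))) +
    (\int[P]_w (s_phi phi (M2 w) (M2 w))).
  rewrite /GL_induced /Exp (RintegralB measurableT (ce_int hH2) (ih M2 iphiM2 mM2 bM2)).
  rewrite EH2 (Eh C iphiC mC bC) (Eh M2 iphiM2 mM2 bM2); lra.
have eRe : GL_residual = - (\int[P]_w (s_phi phi (Q w) (Q w))) +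
    (\int[P]_w (s_phi phi (QBR w) (QBR w))).
  rewrite /GL_residual /Exp (RintegralB measurableT (ce_int hH3) (ih QBR iphiQBR mQBR bQBR)).
  rewrite EH3 (Eh Q iphiQ mQ bQ) (Eh QBR iphiQBR mQBR bQBR); lra.
split.
  rewrite eGL eEx eIn eRe ES; lra.
move=> hprop; rewrite eGL eEx eIn ES.
suff : (\int[P]_w (s_phi phi (Q w) (Q w))) <= (\int[P]_w (s_phi phi (QBR w) (QBR w))).
  by move=> H; lra.
rewrite -hb; apply: le_Rintegral => //; [exact: iS|exact: iS|].
move=> w _; have := hprop _ _ (hQBRS w) (hQS w).
by rewrite /d_phi subr_ge0.
Qed.
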